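(* Let $M$ be a finite monoid. Every filtered left $M$-set is isomorphic to $Me$ for some idempotent $e\in M$. Moreover, $e\mapsto Me$ yields an equivalence of categories $\mathfrak I(M)^{op}\simeq \mathbf{Pts}(M)$, where $\mathbf{Pts}(M)$ is identified (via Diaconescu's theorem) with the category of filtered left $M$-sets and $M$-equivariant maps.
   Context: A left $M$-set $A$ is filtered if the functor $(-)\otimes_M A$ from right $M$-sets to sets preserves finite limits; equivalently (F1) $A\neq\emptyset$; (F2) if $m_1a=m_2a$ ($m_i\in M,a\in A$) then there are $m\in M,\tilde a\in A$ with $m\tilde a=a$, $m_1m=m_2m$; (F3) for $a_1,a_2\in A$ there are $m_1,m_2\in M$, $a\in A$ with $m_ia=a_i$. $\mathbf{Pts}(M)$ is the category of points of the topos of right $M$-sets. The category $\mathfrak I(M)$ has as objects the idempotents of $M$, with $\mathrm{Hom}_{\mathfrak I(M)}(e,f)=fMe=\{fme\mid m\in M\}$, composition given by multiplication in $M$ (the composite of $fme:e\to f$ and $gnf:f\to g$ is $gnfme$), and identity of $e$ equal to $e$. Here $Me=\{me\mid m\in M\}$ is a left $M$-set under left multiplication; an element $a\in eMf$ corresponds to the $M$-map $Me\to Mf$, $me\mapsto ma$. *)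

(* Defs.v *)
From mathcomp Require Import ssreflect ssrfun ssrbool eqtype ssrnat seq choice monoid.

Set Implicit Arguments.
Unset Strict Implicit.
Unset Printing Implicit Defensive.

Local Open Scope group_scope.

Definition finite_monoid (M : monoidType) : Prop :=
  exists s : seq M, forall m : M, m \in s.

Definition idempotent_elt (M : monoidType) (e : M) : Prop := e * e = e.

Definition is_left_action (M : monoidType) (A : Type) (act : M -> A -> A) : Prop :=
  (forall a, act 1 a = a) /\
  (forall m n a, act (m * n) a = act m (act n a)).

(* Filtered left M-sets, conditions (F1)-(F3). *)
Definition filtered (M : monoidType) (A : Type) (act : M -> A -> A) : Prop :=
  [/\ (exists a : A, True),
      (forall (m1 m2 : M) (a : A), act m1 a = act m2 a ->
         exists (m : M) (a' : A), act m a' = a /\ m1 * m = m2 * m)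
    & (forall a1 a2 : A, exists (m1 m2 : M) (a : A),
         act m1 a = a1 /\ act m2 a = a2)].

Definition equivariant (M : monoidType) (A B : Type)
  (actA : M -> A -> A) (actB : M -> B -> B) (g : A -> B) : Prop :=
  forall m a, g (actA m a) = actB m (g a).

Definition Me (M : monoidType) (e : M) : Type := {x : M | exists m : M, x = m * e}.

Lemma Me_closed (M : monoidType) (e : M) (n : M) (x : Me e) :
  exists m : M, n * proj1_sig x = m * e.
Proof.
case: x => x [m Hx] /=; exists (n * m); by rewrite Hx mulgA.
Qed.

Definition Me_act (M : monoidType) (e : M) (n : M) (x : Me e) : Me e :=
  exist _ (n * proj1_sig x) (Me_closed n x).

Definition in_eMf (M : monoidType) (e f a : M) : Prop := exists m : M, a = e * m * f.

Lemma rmul_closed (M : monoidType) (e f a : M) (Ha : in_eMf e f a) (x : Me e) :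
  exists m : M, proj1_sig x * a = m * f.
Proof.
case: Ha => n ->; exists (proj1_sig x * (e * n)); by rewrite mulgA.
Qed.

Definition rmul_map (M : monoidType) (e f a : M) (Ha : in_eMf e f a)
  (x : Me e) : Me f :=
  exist _ (proj1_sig x * a) (rmul_closed Ha x).

(* Main.v *)
Require Import Defs.
From mathcomp Require Import ssreflect ssrfun ssrbool eqtype ssrnat seq choice monoid.
From mathcomp Require Import boolp.
From Stdlib Require Import Classical.
From mathcomp Require Import zify.

Local Open Scope group_scope.

Set Implicit Arguments.
Unset Strict Implicit.

Lemma Me_eq (M : monoidType) (e : M) (x y : Me e) :
  proj1_sig x = proj1_sig y -> x = y.
Proof.
case: x => x px; case: y => y py /= Exy; subst y.
by rewrite (Prop_irrelevance px py).
Qed.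

Lemma Me_r (M : monoidType) (e : M) (He : idempotent_elt e) (x : Me e) :
  proj1_sig x * e = proj1_sig x.
Proof. by case: x => x [n Hx] /=; rewrite Hx -mulgA He. Qed.

Definition Me_e (M : monoidType) (e : M) : Me e :=
  exist _ e (ex_intro _ 1 (esym (mul1g e))).

Section Surj.
Variables (M : monoidType) (A : Type) (act : M -> A -> A).
Variables (s : seq M) (Hs : forall m, m \in s).
Hypothesis (Hact : is_left_action act) (Hf : filtered act).

Definition orb (c : A) : seq {classic A} := undup [seq (act m c : {classic A}) | m <- s].

Lemma in_orb c (b : A) : ((b : {classic A}) \in orb c) <-> exists m, b = act m c.
Proof.
rewrite /orb mem_undup; split.
  by case/mapP => m _ ->; exists m.
by case=> m ->; apply/mapP; exists m.
Qed.

Lemma gen_step n : forall c, size s - size (orb c) <= n ->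
  exists c', forall b, exists m, b = act m c'.
Proof.
case: Hact => H1 HM; case: Hf => _ F2 F3.
elim: n => [|n IH] c Hn.
  case: (classic (forall b, exists m, b = act m c)) => [H|H]; first by exists c.
  have [b Hb] := not_all_ex_not _ _ H.
  have [m1 [m2 [c' [Hc Hb']]]] := F3 c b.
  have sub : {subset orb c <= orb c'}.
    move=> x /(in_orb c x) [m ->]; apply/(in_orb c').
    by exists (m * m1); rewrite HM Hc.
  have Hsz : size (orb c') <= size (orb c).
    have: size (orb c') <= size s by rewrite (leq_trans (size_undup _)) // size_map.
    move=> h; apply: (leq_trans h); by rewrite -subn_eq0 -leqn0.
  have [_ E] := uniq_min_size (undup_uniq _) sub Hsz.
  have : (b : {classic A}) \in orb c' by apply/(in_orb c'); exists m2.
  by rewrite -E => /(in_orb c); move/Hb.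
case: (classic (forall b, exists m, b = act m c)) => [H|H]; first by exists c.
have [b Hb] := not_all_ex_not _ _ H.
have [m1 [m2 [c' [Hc Hb']]]] := F3 c b.
have sub : {subset orb c <= orb c'}.
  move=> x /(in_orb c x) [m ->]; apply/(in_orb c').
  by exists (m * m1); rewrite HM Hc.
case: (leqP (size (orb c')) (size (orb c))) => Hsz.
  have [_ E] := uniq_min_size (undup_uniq _) sub Hsz.
  have : (b : {classic A}) \in orb c' by apply/(in_orb c'); exists m2.
  by rewrite -E => /(in_orb c); move/Hb.
apply: (IH c').
have h: size (orb c') <= size s by rewrite (leq_trans (size_undup _)) // size_map.
move: Hn Hsz h; clear; lia.
Qed.

Lemma gen_exists : exists c, forall b, exists m, b = act m c.
Proof.
case: Hf => [[c _] _ _]; apply: (@gen_step (size s) c); exact: leq_subr.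
Qed.

Variable c : A.
Hypothesis Hgen : forall b, exists m, b = act m c.

Lemma kill (L : seq (M * M)) : exists w, act w c = c /\
  forall p, p \in L -> act p.1 c = act p.2 c -> p.1 * w = p.2 * w.
Proof.
case: Hact => H1 HM; case: Hf => _ F2 _.
elim: L => [|p L [w [Hw HL]]]; first by exists 1; split.
case: (classic (act p.1 c = act p.2 c)) => Hp; last first.
  exists w; split => // q; rewrite in_cons => /orP [/eqP -> //|]; exact: HL.
have: act (p.1 * w) c = act (p.2 * w) c by rewrite !HM Hw.
case/F2 => m [a' [Ha' Hm]].
have [k Hk] := Hgen a'.
exists (w * (m * k)); split.
  by rewrite !HM -Hk Ha' Hw.
move=> q; rewrite in_cons => /orP [/eqP -> _|Hq Hq'].
  by rewrite !mulgA Hm.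
by rewrite !mulgA (HL q Hq Hq').
Qed.

Lemma surj_main : exists (e : M) (phi : A -> Me e),
  idempotent_elt e /\ bijective phi /\ equivariant act (@Me_act M e) phi.
Proof.
case: Hact => H1 HM.
have [w [Hw Hk]] := kill [seq (x, y) | x <- s, y <- s].
have Kw : forall m1 m2, act m1 c = act m2 c -> m1 * w = m2 * w.
  move=> m1 m2 H; apply: (Hk (m1, m2)) => //.
  exact: (allpairs_f pair (Hs m1) (Hs m2)).
have Iw : idempotent_elt w.
  by rewrite /idempotent_elt; have := Kw w 1; rewrite mul1g; apply; rewrite H1.
pose sel b := proj1_sig (cid (Hgen b)).
have Hsel : forall b, b = act (sel b) c by move=> b; exact: (proj2_sig (cid (Hgen b))).
pose phi b : Me w := exist _ (sel b * w) (ex_intro _ (sel b) erefl).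
exists w, phi; split => //; split.
  exists (fun x : Me w => act (proj1_sig x) c).
    by move=> b /=; rewrite HM Hw -Hsel.
  move=> [x [n Hx]]; apply: Me_eq => /=; rewrite [in RHS]Hx; apply: Kw.
  by rewrite -Hsel Hx HM Hw.
move=> m b; apply: Me_eq => /=; rewrite mulgA; apply: Kw.
by rewrite HM -!Hsel.
Qed.

End Surj.

Theorem theorem3p14 (M : monoidType) (finM : finite_monoid M) :
  (* the functor e |-> Me lands in filtered left M-sets (= Pts(M)) *)
  (forall e : M, idempotent_elt e ->
     is_left_action (@Me_act M e) /\ filtered (@Me_act M e)) /\
  (* functoriality: identities and composition are preserved *)
  (forall (e : M) (He : idempotent_elt e) (Hee : in_eMf e e e) (x : Me e),
     rmul_map Hee x = x) /\
  (forall (e f g a b : M) (Ha : in_eMf e f a) (Hb : in_eMf f g b)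
          (Hab : in_eMf e g (a * b)) (x : Me e),
     rmul_map Hab x = rmul_map Hb (rmul_map Ha x)) /\
  (* full faithfulness: a |-> (x |-> x a) is a bijection from eMf onto the
     M-equivariant maps Me -> Mf *)
  (forall e f : M, idempotent_elt e -> idempotent_elt f ->
     (forall (a b : M) (Ha : in_eMf e f a) (Hb : in_eMf e f b),
        (forall x : Me e, rmul_map Ha x = rmul_map Hb x) -> a = b) /\
     (forall h : Me e -> Me f,
        equivariant (@Me_act M e) (@Me_act M f) h ->
        exists (a : M) (Ha : in_eMf e f a), forall x : Me e, h x = rmul_map Ha x)) /\
  (* essential surjectivity: every filtered left M-set is isomorphic to some Me *)
  (forall (A : Type) (act : M -> A -> A),
     is_left_action act -> filtered act ->
     exists (e : M) (phi : A -> Me e),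
       idempotent_elt e /\ bijective phi /\ equivariant act (@Me_act M e) phi).
Proof.
split.
  move=> e He; split.
    split=> [x|m n x]; apply: Me_eq => /=; [exact: mul1g | exact: (esym (mulgA _ _ _))].
  split.
  - by exists (Me_e e).
  - move=> m1 m2 x H; exists (proj1_sig x), (Me_e e); split.
      by apply: Me_eq => /=; exact: Me_r.
    by move: (f_equal (@proj1_sig _ _) H).
  - move=> a1 a2; exists (proj1_sig a1), (proj1_sig a2), (Me_e e).
    by split; apply: Me_eq => /=; exact: Me_r.
split.
  by move=> e He Hee x; apply: Me_eq => /=; exact: Me_r.
split.
  by move=> e f g a b Ha Hb Hab x; apply: Me_eq => /=; rewrite mulgA.
split.
  move=> e f He Hf; split.
    move=> a b Ha Hb H; move: (f_equal (@proj1_sig _ _) (H (Me_e e))) => /=.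
    case: (Ha) => n Ha'; case: (Hb) => k Hb'.
    have Ea : e * a = a by rewrite Ha' !mulgA He.
    have Eb : e * b = b by rewrite Hb' !mulgA He.
    by rewrite Ea Eb.
  move=> h Hh.
  have Eee : Me_e e = Me_act e (Me_e e) by apply: Me_eq => /=; rewrite He.
  set a := proj1_sig (h (Me_e e)).
  have Ha : in_eMf e f a.
    have Ea : a = e * a by rewrite /a {1}Eee Hh.
    case: (proj2_sig (h (Me_e e))) => n Hn.
    by exists n; rewrite Ea /a Hn mulgA.
  exists a, Ha => x.
  have Ex : x = Me_act (proj1_sig x) (Me_e e) by apply: Me_eq => /=; rewrite Me_r.
  by apply: Me_eq => /=; rewrite {1}Ex Hh.
move=> A act Hact Hfl.
case: finM => s Hs.
have [c Hc] := gen_exists Hs Hact Hfl.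
exact: (surj_main Hs Hact Hfl Hc).
Qed.
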